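(* Let $I$ be an interval containing $t_0$, let $\mu$ be a nonvanishing differentiable real function on $I$ and $\omega^2$ a real function on $I$. Let $r(t)$ be the solution of the initial value problem $$\ddot r+\frac{\dot\mu(t)}{\mu(t)}\dot r+\omega^2(t) r=0,\qquad r(t_0)=r_0\neq 0,\quad \dot r(t_0)=0,$$ and define $$\eta(x,t)=\frac{r(t_0)}{r(t)}\,x,\qquad \tau(t)=r^2(t_0)\int_{t_0}^{t}\frac{d\xi}{\mu(\xi)r^2(\xi)}\quad(\text{so }\tau(t_0)=0).$$ Let $\varphi(\eta,\tau)$ be the solution of the initial value problem for the classical heat equation $$\varphi_\tau=\tfrac12\varphi_{\eta\eta},\qquad \varphi(\eta,0)=\Phi(\eta,t_0),\quad -\infty<\eta<\infty.$$ Then the initial value problem for the variable parametric parabolic equation $$\frac{\partial\Phi}{\partial t}=\frac{1}{2\mu(t)}\frac{\partial^2\Phi}{\partial x^2}+\frac{\mu(t)\omega^2(t)}{2}x^2\Phi,\qquad \Phi(x,t)|_{t=t_0}=\Phi(x,t_0),\quad -\infty<x<\infty,$$ has the solution $$\Phi(x,t)=\sqrt{\frac{r(t_0)}{r(t)}}\;\exp\!\left(-\frac{\mu(t)\dot r(t)}{2r(t)}x^2\right)\varphi\big(\eta(x,t),\tau(t)\big).$$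
   Context: Dots denote derivatives with respect to $t$. The formula is considered for $t$ at which $r(t)\neq 0$; the square root (equivalently $\tfrac12\ln(r(t_0)/r(t))$ in the exponent) is allowed to be complex-valued. *)

(* Defs.v *)
From Stdlib Require Import Reals.
From Coquelicot Require Export Coquelicot.
Open Scope R_scope.

Definition tau (mu r : R -> R) (t0 t : R) : R :=
  r t0 ^ 2 * RInt (fun xi => / (mu xi * r xi ^ 2)) t0 t.

Definition eta (r : R -> R) (t0 x t : R) : R := r t0 / r t * x.

Definition Phi_sol (mu r : R -> R) (phi : R -> R -> R) (t0 x t : R) : R :=
  sqrt (r t0 / r t) * exp (- (mu t * Derive r t) / (2 * r t) * x ^ 2)
  * phi (eta r t0 x t) (tau mu r t0 t).

Definition in_I (a b : Rbar) (t : R) : Prop := Rbar_lt a t /\ Rbar_lt t b.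

Definition nonvanishing_between (r : R -> R) (t0 t : R) : Prop :=
  forall s, Rmin t0 t <= s <= Rmax t0 t -> r s <> 0.

(* Main.v *)
Require Import Defs.
From Stdlib Require Import Reals Lra.
From Coquelicot Require Import Coquelicot.
Open Scope R_scope.

Lemma seg_in_I a b t0 t u : in_I a b t0 -> in_I a b t ->
  Rmin t0 t <= u <= Rmax t0 t -> in_I a b u.
Proof.
  intros [H1 H2] [H3 H4] [H5 H6]. split.
  - apply Rbar_lt_le_trans with (Rmin t0 t).
    + unfold Rmin; destruct Rle_dec; auto.
    + simpl; lra.
  - apply Rbar_le_lt_trans with (Rmax t0 t).
    + simpl; lra.
    + unfold Rmax; destruct Rle_dec; auto.
Qed.

Lemma same_sign (f : R -> R) lo hi : lo <= hi ->
  (forall u, lo <= u <= hi -> continuity_pt f u) ->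
  (forall u, lo <= u <= hi -> f u <> 0) -> 0 < f lo * f hi.
Proof.
  intros Hle Hc Hn.
  assert (Hlo : f lo <> 0) by (apply Hn; lra).
  assert (Hhi : f hi <> 0) by (apply Hn; lra).
  destruct (Rle_lt_or_eq_dec _ _ Hle) as [Hlt|Heq].
  2:{ subst. nra. }
  destruct (Rlt_or_le 0 (f lo * f hi)) as [H|H]; auto. exfalso.
  destruct (Rlt_or_le (f lo) 0) as [Hl|Hl].
  - assert (0 < f hi) by (destruct (Rlt_or_le 0 (f hi)); auto; nra).
    destruct (Ranalysis5.IVT_interv f lo hi Hc Hlt Hl H0) as [z [Hz1 Hz2]].
    exact (Hn z Hz1 Hz2).
  - assert (Hl' : 0 < f lo) by lra.
    assert (f hi < 0) by (destruct (Rlt_or_le (f hi) 0); auto; nra).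
    assert (Hc' : forall u, lo <= u <= hi -> continuity_pt (fun x => - f x) u).
    { intros u Hu. apply continuity_pt_opp. auto. }
    destruct (Ranalysis5.IVT_interv (fun x => - f x) lo hi Hc' Hlt) as [z [Hz1 Hz2]]; try lra.
    apply (Hn z Hz1). lra.
Qed.

Lemma space (q k c : R) (p : R -> R) x :
  (forall e, ex_derive p e) -> (forall e, ex_derive (Derive p) e) ->
  ex_derive (fun y => q * exp (k * y ^ 2) * p (c * y)) x /\
  ex_derive (Derive (fun y => q * exp (k * y ^ 2) * p (c * y))) x /\
  Derive_n (fun y => q * exp (k * y ^ 2) * p (c * y)) 2 x =
  q * exp (k * x ^ 2) * ((2 * k * x) ^ 2 * p (c * x) + 2 * k * p (c * x)
     + 4 * k * x * c * Derive p (c * x) + c ^ 2 * Derive (Derive p) (c * x)).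
Proof.
  intros H1 H2.
  set (D1 := fun y => q * exp (k * y ^ 2) * (2 * k * y * p (c * y) + c * Derive p (c * y))).
  assert (HD1 : forall y, is_derive (fun y => q * exp (k * y ^ 2) * p (c * y)) y (D1 y)).
  { intros y. auto_derive. - apply H1. - unfold D1; cbv beta. change (fun x0 => p x0) with p. replace (k * (y * (y * 1))) with (k * y^2) by ring. ring. }
  assert (HD : forall y, Derive (fun y => q * exp (k * y ^ 2) * p (c * y)) y = D1 y).
  { intros y. apply is_derive_unique. auto. }
  assert (HD2 : is_derive D1 x (q * exp (k * x ^ 2) * ((2 * k * x) ^ 2 * p (c * x) + 2 * k * p (c * x)
     + 4 * k * x * c * Derive p (c * x) + c ^ 2 * Derive (Derive p) (c * x)))).
  { unfold D1. auto_derive. - repeat split; auto. - change (fun x0 => p x0) with p. change (fun x0 => Derive p x0) with (Derive p). replace (k * (x * (x * 1))) with (k * x^2) by ring. ring. }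
  split; [exists (D1 x); auto|]. split.
  - apply ex_derive_ext with D1. intros; symmetry; auto. eexists; apply HD2.
  - cbn [Derive_n]. transitivity (Derive D1 x). { apply Derive_ext. exact HD. } apply is_derive_unique; auto.
Qed.

Lemma near_t a b (r : R -> R) t : in_I a b t -> ex_derive r t -> r t <> 0 ->
  locally t (fun u => in_I a b u /\ r u <> 0).
Proof.
  intros [Ha Hb] Hd Hn. unfold in_I. apply filter_and.
  - apply filter_and.
    + apply (open_Rbar_gt a t Ha).
    + apply (open_Rbar_lt b t Hb).
  - apply (ex_derive_continuous r t Hd (fun y => y <> 0)). apply (open_neq 0 (r t) Hn).
Qed.

Lemma seg_arith t0 t b' z :
  Rmin t0 b' <= z <= Rmax t0 b' -> ~ (Rmin t0 t <= z <= Rmax t0 t) ->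
  Rabs (z - t) <= Rabs (b' - t).
Proof.
  intros H1 H2. unfold Rmin, Rmax in *.
  destruct (Rle_dec t0 b'); destruct (Rle_dec t0 t); split_Rabs; lra.
Qed.

Lemma tau_deriv a b (mu r : R -> R) t0 t :
  (forall u, in_I a b u -> mu u <> 0 /\ ex_derive mu u) ->
  (forall u, in_I a b u -> ex_derive r u) ->
  in_I a b t0 -> in_I a b t -> nonvanishing_between r t0 t ->
  is_derive (fun s => tau mu r t0 s) t (r t0 ^ 2 * / (mu t * r t ^ 2)).
Proof.
  intros Hmu Hr H0 Ht Hnv.
  set (f := fun xi => / (mu xi * r xi ^ 2)).
  assert (Hc : forall u, in_I a b u -> r u <> 0 -> continuous f u).
  { intros u Hu Hru. apply (ex_derive_continuous f u). destruct (Hmu u Hu) as [Hm Hdm].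
    unfold f. auto_derive. repeat split; auto. rewrite Rmult_1_r. repeat apply Rmult_integral_contrapositive_currified; auto. }
  assert (Hrt : r t <> 0).
  { apply Hnv. split; [apply Rmin_r|apply Rmax_r]. }
  destruct (near_t a b r t Ht (Hr t Ht) Hrt) as [eps Heps].
  unfold tau. fold f.
  apply (is_derive_scal (fun s => RInt f t0 s)).
  apply (is_derive_RInt f (fun s => RInt f t0 s) t0 t).
  - exists eps. intros b' Hb'. apply (RInt_correct f t0 b'). apply (ex_RInt_continuous f t0 b').
    intros z Hz.
    destruct (Rle_dec (Rmin t0 t) z); destruct (Rle_dec z (Rmax t0 t)).
    + apply Hc. apply (seg_in_I a b t0 t z H0 Ht); lra. apply Hnv; lra.
    + assert (Hbz : ball t eps z).
      { change (Rabs (b' - t) < eps) in Hb'. change (Rabs (z - t) < eps).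
        eapply Rle_lt_trans; [apply (seg_arith t0 t b' z Hz)|exact Hb']. lra. }
      destruct (Heps z Hbz). apply Hc; auto.
    + assert (Hbz : ball t eps z).
      { change (Rabs (b' - t) < eps) in Hb'. change (Rabs (z - t) < eps).
        eapply Rle_lt_trans; [apply (seg_arith t0 t b' z Hz)|exact Hb']. lra. }
      destruct (Heps z Hbz). apply Hc; auto.
    + exfalso. assert (Rmin t0 t <= Rmax t0 t) by apply Rmin_Rmax. lra.
  - apply Hc; auto.
Qed.

Theorem proposition1 (a b : Rbar) (t0 r0 : R) (mu w2 r Phi0 : R -> R)
  (phi : R -> R -> R) :
  in_I a b t0 ->
  (forall t, in_I a b t -> mu t <> 0 /\ ex_derive mu t) ->
  (forall t, in_I a b t ->
     ex_derive r t /\ ex_derive (Derive r) t /\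
     Derive_n r 2 t + Derive mu t / mu t * Derive r t + w2 t * r t = 0) ->
  r t0 = r0 -> r0 <> 0 -> Derive r t0 = 0 ->
  (forall t, in_I a b t -> nonvanishing_between r t0 t ->
     forall e,
       ex_derive (fun y => phi y (tau mu r t0 t)) e /\
       ex_derive (Derive (fun y => phi y (tau mu r t0 t))) e /\
       differentiable_pt_lim phi e (tau mu r t0 t)
         (Derive (fun y => phi y (tau mu r t0 t)) e)
         (Derive (fun s => phi e s) (tau mu r t0 t)) /\
       Derive (fun s => phi e s) (tau mu r t0 t)
         = / 2 * Derive_n (fun y => phi y (tau mu r t0 t)) 2 e) ->
  (forall e, phi e 0 = Phi0 e) ->
  (forall x, Phi_sol mu r phi t0 x t0 = Phi0 x) /\
  (forall t, in_I a b t -> nonvanishing_between r t0 t ->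
     forall x,
       ex_derive (fun y => Phi_sol mu r phi t0 y t) x /\
       ex_derive (Derive (fun y => Phi_sol mu r phi t0 y t)) x /\
       is_derive (fun s => Phi_sol mu r phi t0 x s) t
         (/ (2 * mu t) * Derive_n (fun y => Phi_sol mu r phi t0 y t) 2 x
          + mu t * w2 t / 2 * x ^ 2 * Phi_sol mu r phi t0 x t)).
Proof.
  intros HI0 Hmu Hr Hr0 Hr0n Hdr0 Hphi Hinit.
  assert (Hrt0 : r t0 <> 0) by congruence.
  split.
  - intros x. unfold Phi_sol, eta, tau. rewrite RInt_point, Hdr0.
    replace (r t0 / r t0) with 1 by (field; auto). rewrite sqrt_1.
    replace (- (mu t0 * 0) / (2 * r t0) * x ^ 2) with 0 by (field; auto).
    rewrite exp_0. replace (r t0 ^ 2 * zero) with 0 by (unfold zero; simpl; ring).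
    replace (1 * x) with x by ring. rewrite !Rmult_1_l, <- Hinit. f_equal. unfold zero; simpl; ring.
  - intros t Ht Hnv x.
    assert (Hrt : r t <> 0) by (apply Hnv; split; [apply Rmin_r|apply Rmax_r]).
    destruct (Hmu t Ht) as [Hmut Hdmu].
    destruct (Hr t Ht) as [Hdr [Hddr Hode]].
    assert (Hc : 0 < r t0 / r t).
    { assert (H : 0 < r (Rmin t0 t) * r (Rmax t0 t)).
      { apply same_sign. apply Rmin_Rmax.
        - intros u Hu. apply continuity_pt_filterlim. apply (ex_derive_continuous r u).
          apply Hr. apply (seg_in_I a b t0 t u HI0 Ht Hu).
        - exact Hnv. }
      assert (0 < r t0 * r t) by (unfold Rmin, Rmax in H; destruct Rle_dec; nra).
      replace (r t0 / r t) with ((r t0 * r t) / (r t * r t)) by (field; auto).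
      apply Rdiv_lt_0_compat; nra. }
    pose proof (fun e => proj1 (Hphi t Ht Hnv e)) as Hpe1.
    pose proof (fun e => proj1 (proj2 (Hphi t Ht Hnv e))) as Hpe2.
    destruct (space (sqrt (r t0 / r t)) (- (mu t * Derive r t) / (2 * r t)) (r t0 / r t)
       (fun y => phi y (tau mu r t0 t)) x Hpe1 Hpe2) as [S1 [S2 S3]].
    split; [exact S1|]. split; [exact S2|].
    assert (E3 : Derive_n (fun y => Phi_sol mu r phi t0 y t) 2 x =
      sqrt (r t0 / r t) * exp (- (mu t * Derive r t) / (2 * r t) * x ^ 2) *
      ((2 * (- (mu t * Derive r t) / (2 * r t)) * x) ^ 2 * phi (r t0 / r t * x) (tau mu r t0 t)
       + 2 * (- (mu t * Derive r t) / (2 * r t)) * phi (r t0 / r t * x) (tau mu r t0 t)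
       + 4 * (- (mu t * Derive r t) / (2 * r t)) * x * (r t0 / r t) *
           Derive (fun y => phi y (tau mu r t0 t)) (r t0 / r t * x)
       + (r t0 / r t) ^ 2 * Derive (Derive (fun y => phi y (tau mu r t0 t))) (r t0 / r t * x)))
      by exact S3.
    rewrite E3.
    destruct (Hphi t Ht Hnv (r t0 / r t * x)) as [_ [_ [Hdiff Hheat]]].
    assert (Hg1 : is_derive (fun s => r t0 / r s * x) t (- r t0 * Derive r t / (r t) ^ 2 * x)).
    { auto_derive. split; auto. change (fun x0 => r x0) with r. field. auto. }
    pose proof (tau_deriv a b mu r t0 t Hmu (fun u Hu => proj1 (Hr u Hu)) HI0 Ht Hnv) as Htau.
    assert (HF : is_derive (fun s => phi (r t0 / r s * x) (tau mu r t0 s)) t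
      (Derive (fun y => phi y (tau mu r t0 t)) (r t0 / r t * x) * (- r t0 * Derive r t / (r t) ^ 2 * x)
       + Derive (fun s => phi (r t0 / r t * x) s) (tau mu r t0 t) * (r t0 ^ 2 * / (mu t * r t ^ 2)))).
    { apply is_derive_Reals.
      apply (derivable_pt_lim_comp_2d phi (fun s => r t0 / r s * x) (fun s => tau mu r t0 s) t).
      - exact Hdiff.
      - apply is_derive_Reals; exact Hg1.
      - apply is_derive_Reals; exact Htau. }
    set (F := fun s => phi (r t0 / r s * x) (tau mu r t0 s)) in HF.
    change (is_derive (fun s => sqrt (r t0 / r s) * exp (- (mu s * Derive r s) / (2 * r s) * x ^ 2) * F s) t
      (/ (2 * mu t) * (sqrt (r t0 / r t) * exp (- (mu t * Derive r t) / (2 * r t) * x ^ 2) *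
      ((2 * (- (mu t * Derive r t) / (2 * r t)) * x) ^ 2 * phi (r t0 / r t * x) (tau mu r t0 t)
       + 2 * (- (mu t * Derive r t) / (2 * r t)) * phi (r t0 / r t * x) (tau mu r t0 t)
       + 4 * (- (mu t * Derive r t) / (2 * r t)) * x * (r t0 / r t) *
           Derive (fun y => phi y (tau mu r t0 t)) (r t0 / r t * x)
       + (r t0 / r t) ^ 2 * Derive (Derive (fun y => phi y (tau mu r t0 t))) (r t0 / r t * x)))
       + mu t * w2 t / 2 * x ^ 2 * (sqrt (r t0 / r t) * exp (- (mu t * Derive r t) / (2 * r t) * x ^ 2) * F t))).
    evar (L : R).
    assert (HG : is_derive (fun s => sqrt (r t0 / r s) * exp (- (mu s * Derive r s) / (2 * r s) * x ^ 2) * F s) t L).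
    { auto_derive. - repeat split; auto; try (eexists; exact HF); try (apply Rmult_integral_contrapositive_currified; auto; lra). - subst L. reflexivity. }
    change (fun x0 => r x0) with r in HG. change (fun x0 => mu x0) with mu in HG. change (fun x0 => Derive r x0) with (Derive r) in HG. change (fun x0 => F x0) with F in HG.
    unfold L in HG.
    revert HG. match goal with |- is_derive _ _ ?l1 -> is_derive _ _ ?l2 => replace l2 with l1; [auto|] end.
    change (fun x0 => r x0) with r. change (fun x0 => mu x0) with mu. change (fun x0 => Derive r x0) with (Derive r). change (fun x0 => F x0) with F.
    rewrite (is_derive_unique F t _ HF). unfold F. rewrite Hheat.
    cbn [Derive_n] in Hode |- *.
    change (Derive (Derive r) t + Derive mu t / mu t * Derive r t + w2 t * r t = 0) in Hode.
    replace (Derive (Derive r) t) with (- (Derive mu t / mu t * Derive r t) - w2 t * r t) by lra.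
    change (Derive (fun x0 : R => Derive (fun x1 : R => phi x1 (tau mu r t0 t)) x0))
      with (Derive (Derive (fun y : R => phi y (tau mu r t0 t)))).
    set (P0 := phi (r t0 / r t * x) (tau mu r t0 t)).
    set (P1 := Derive (fun y => phi y (tau mu r t0 t)) (r t0 / r t * x)).
    set (P2 := Derive (Derive (fun y => phi y (tau mu r t0 t))) (r t0 / r t * x)).
    clearbody P0 P1 P2.
    unfold Rdiv.
    replace (x * (x * 1)) with (x ^ 2) by ring.
    assert (Hqq : sqrt (r t0 * / r t) * sqrt (r t0 * / r t) = r t0 * / r t) by (apply sqrt_sqrt; unfold Rdiv in Hc; lra).
    assert (Hq0 : sqrt (r t0 * / r t) <> 0) by (apply Rgt_not_eq, sqrt_lt_R0; unfold Rdiv in Hc; lra).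
    assert (Hinvq : / (2 * sqrt (r t0 * / r t)) = sqrt (r t0 * / r t) * / (2 * (r t0 * / r t))).
    { revert Hqq Hq0. generalize (sqrt (r t0 * / r t)). intros q Hqq Hq0. rewrite <- Hqq. field. auto. }
    rewrite Hinvq.
    set (q := sqrt (r t0 * / r t)). set (E := exp (- (mu t * Derive r t) * / (2 * r t) * x ^ 2)).
    clearbody q E.
    field. repeat split; auto.
Qed.
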